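(* Let $n\ge1$ and let $A_n(1)$ be the $n\times(2n-1)$ matrix $\big[\binom{n+k-1-i}{k-i}\big]_{1\le i\le n,\,1\le k\le 2n-1}$ (with $\binom{m}{j}=0$ for $j<0$). For a strictly increasing map $\sigma:\{1,\ldots,n\}\to\{1,\ldots,2n-1\}$, let $\mathrm A_\sigma(1)$ be the $n\times n$ minor of $A_n(1)$ formed by the columns $\sigma_1<\cdots<\sigma_n$, and let $\tilde\sigma$ be the strictly increasing map $\tilde\sigma_i=2n-\sigma_{n+1-i}$. Then $\mathrm A_\sigma(1)=\mathrm A_{\tilde\sigma}(1)>0$. *)

(* Defs.v *)
From mathcomp Require Import all_boot all_order all_algebra.
Set Implicit Arguments. Unset Strict Implicit. Unset Printing Implicit Defensive.
Import Order.TTheory GRing.Theory Num.Theory.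
Local Open Scope ring_scope.

(* Indices are 0-based: row i : 'I_n stands for the paper's i+1,
   column k : 'I_(2n-1) for the paper's k+1.  The paper's entry
   binom(n+k-1-i, k-i) (0 when k<i) becomes, in 0-based indices,
   binom(n-1+(k-i), k-i) when i <= k and 0 otherwise. *)
Definition A1 (n : nat) : 'M[int]_(n, 2 * n - 1) :=
  \matrix_(i < n, k < 2 * n - 1)
    (if (i <= k)%N then ('C(n.-1 + (k - i), k - i))%:Z else 0).

Definition Aminor (n : nat) (sigma : 'I_n -> 'I_(2 * n - 1)) : 'M[int]_n :=
  colsub sigma (A1 n).

(* tilde sigma_i = 2n - sigma_{n+1-i} (1-based); 0-based this is
   (2n-2) - sigma(n-1-i) = rev_ord (sigma (rev_ord i)). *)
Definition sigma_tilde (n : nat) (sigma : 'I_n -> 'I_(2 * n - 1)) :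
  'I_n -> 'I_(2 * n - 1) := fun i => rev_ord (sigma (rev_ord i)).

(* Main.v *)
Require Import Defs.
From mathcomp Require Import all_boot all_order all_algebra.
From mathcomp Require Import ring zify.
Import Order.TTheory GRing.Theory Num.Theory.
Local Open Scope ring_scope.

Lemma Pval (N i k : nat) : (i <= N)%N ->
  \prod_(m < N) ((k%:R : rat) - (i%:R - m.+1%:R)) =
  (if (i <= k)%N then ('C(N + (k - i), k - i) * N`!)%N%:R else 0).
Proof.
move=> HiN; case: leqP => Hik.
  have -> : 'C((N + (k - i))%N, (k - i)%N) = 'C((N + (k - i))%N, N).
    by rewrite -{2}(addKn N (k - i)%N) bin_sub // leq_addr.
  rewrite bin_ffact ffact_prod natr_prod (reindex_inj rev_ord_inj) /=.
  apply: eq_bigr => m _.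
  have Hm := ltn_ord m.
  have -> : (N - m.+1).+1 = (N - m)%N by lia.
  have Hm2 : (m <= N + (k - i))%N by lia.
  rewrite (natrB _ (ltnW Hm)) (natrB _ Hm2) natrD (natrB _ Hik); ring.
have Hm : (i - k.+1 < N)%N by lia.
rewrite (bigD1 (Ordinal Hm)) //= [X in X * _](_ : _ = 0) ?mul0r //.
have -> : (i - k.+1).+1 = (i - k)%N by lia.
rewrite (natrB _ (ltnW Hik)); ring.
Qed.

Definition Pp (N i : nat) : {poly rat} :=
  (N`!%:R)^-1 *: \prod_(m < N) ('X - (i%:R - m.+1%:R)%:P).

Lemma Pp_val N i k : (i <= N)%N ->
  (Pp N i).[k%:R] = (if (i <= k)%N then 'C(N + (k - i), k - i) else 0)%N%:R.
Proof.
move=> HiN; rewrite hornerZ horner_prod.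
under eq_bigr do rewrite hornerXsubC.
rewrite Pval //; case: ifP => _; rewrite ?mulr0 // natrM mulrCA mulVf ?mulr1 //.
by rewrite pnatr_eq0 -lt0n fact_gt0.
Qed.

Lemma size_Pp N i : (size (Pp N i) <= N.+1)%N.
Proof.
rewrite (leq_trans (size_scale_leq _ _)) // size_prod_XsubC.
by rewrite /index_enum unlock -enumT size_enum_ord.
Qed.

Definition Cm n : 'M[rat]_n := \matrix_(i < n, k < n) (Pp n.-1 i)`_k.

Lemma minor_fact n (sigma : 'I_n -> 'I_(2 * n - 1)) : (1 <= n)%N ->
  map_mx intr (Aminor sigma) =
  Cm n *m Vandermonde n (\row_j (((sigma j : nat)%:R) : rat)).
Proof.
move=> hn; apply/matrixP => i j; rewrite !mxE.
under eq_bigr do rewrite !mxE.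
rewrite -horner_coef_wide; last by rewrite (leq_trans (size_Pp _ _)) // prednK.
rewrite Pp_val; last by rewrite -ltnS prednK.
by case: ifP.
Qed.

Definition W n (x : 'I_n -> rat) := \prod_(i < n) \prod_(j < n | (i < j)%N) (x j - x i).

Lemma det_fact n (sigma : 'I_n -> 'I_(2 * n - 1)) : (1 <= n)%N ->
  intr (\det (Aminor sigma)) = \det (Cm n) * @W n (fun j => ((sigma j : nat)%:R)).
Proof.
move=> hn; rewrite -det_map_mx minor_fact // det_mulmx det_Vandermonde.
congr (_ * _); apply: eq_bigr => i _; apply: eq_bigr => j _; by rewrite !mxE.
Qed.

Lemma W_ext n (x y : 'I_n -> rat) : (forall j, x j = y j) -> @W n x = @W n y.
Proof.
by move=> e; apply: eq_bigr => i _; apply: eq_bigr => j _; rewrite !e.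
Qed.

Lemma W_pos n (x : 'I_n -> rat) :
  (forall i j : 'I_n, (i < j)%N -> x i < x j) -> 0 < @W n x.
Proof.
move=> h; apply: prodr_gt0 => i _; apply: prodr_gt0 => j ij.
by rewrite subr_gt0 h.
Qed.

Lemma W_rev n (c : rat) (x : 'I_n -> rat) :
  @W n (fun j => c - x (rev_ord j)) = @W n x.
Proof.
rewrite /W !(pair_big_dep xpredT (fun i j : 'I_n => (i < j)%N)) /=.
pose h (p : 'I_n * 'I_n) := (rev_ord p.2, rev_ord p.1).
have hK : cancel h h by case=> a b; rewrite /h /= !rev_ordK.
rewrite (reindex_inj (can_inj hK)) /=.
apply: eq_big => [[a b]|[a b] _] /=; rewrite ?rev_ordK.
  have := ltn_ord a; have := ltn_ord b; lia.
ring.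
Qed.

Lemma Aminor_id_det n (h : (n <= 2 * n - 1)%N) :
  \det (Aminor (fun i : 'I_n => widen_ord h i)) = 1.
Proof.
rewrite -det_tr det_trig.
  apply: big1 => i _; rewrite !mxE /= leqnn subnn addn0 bin0 //.
apply/is_trig_mxP => i j ij; rewrite !mxE /=.
by case: leqP => //; lia.
Qed.

Theorem proposition5 (n : nat) (hn : (1 <= n)%N)
  (sigma : 'I_n -> 'I_(2 * n - 1))
  (hsigma : forall i j : 'I_n, (i < j)%N -> (sigma i < sigma j)%N) :
  \det (Aminor sigma) = \det (Aminor (sigma_tilde sigma)) /\
  0 < \det (Aminor sigma).
Proof.
have h : (n <= 2 * n - 1)%N by lia.
have Wid := Aminor_id_det n h.
have C1 := det_fact n (fun i : 'I_n => widen_ord h i) hn.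
rewrite Wid rmorph1 in C1.
have Wsid : 0 < @W n (fun j => ((widen_ord h j : nat)%:R)).
  by apply: W_pos => i j ij; rewrite /= ltr_nat.
have Cpos : 0 < \det (Cm n) by rewrite -(pmulr_lgt0 _ Wsid) -C1.
split.
  apply: (@intr_inj rat); rewrite !det_fact //; congr (_ * _).
  rewrite -[in RHS](W_rev n ((2 * n - 1).-1)%:R).
  apply: W_ext => j; rewrite /sigma_tilde /= rev_ordK.
  have := ltn_ord (sigma j).
  set k := nat_of_ord (sigma j) => hk.
  have -> : (2 * n - 1 - k.+1 = (2 * n - 1).-1 - k)%N by lia.
  have hk2 : (k <= (2 * n - 1).-1)%N by lia.
  rewrite (natrB _ hk2); ring.
rewrite -(ltr0z rat) det_fact // mulr_gt0 //.
by apply: W_pos => i j ij; rewrite ltr_nat hsigma.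
Qed.
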